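(* Fix a positive integer $n$, a nonzero $n$-partition $\lambda$ with $\lambda_n=0$, an $n$-semistandard tableau $T$ of shape $\lambda$, a column $1\le l<\lambda_1$ and a location $(j,i)>(l,1)$ in reading order. Then the scanning path $P(T;l,k)$ ($1\le k\le c_l$) that contains $(j,i)$ is the one whose most recent value relative to $(j,i)$ is the largest among those most recent values (over $1\le k\le c_l$) that are less than or equal to $T(j,i)$.
   Context: Identify $\lambda=(\lambda_1,\dots,\lambda_n)$ (weakly decreasing nonnegative integers, $\lambda_n=0$, $\lambda\ne0$) with its Young diagram; $c_j$ is the length of column $j$; $(j,i)$ is the box in column $j$, row $i$. Reading order: $(l,k)\le(j,i)$ iff $l<j$, or $l=j$ and $k\ge i$. An $n$-semistandard tableau $T$ of shape $\lambda$ has entries in $[n]$, weakly increasing along rows, strictly increasing down columns; $T(j,i)$ is its entry. The EWIS of a sequence $x_1,x_2,\dots$ is $x_{a_1},x_{a_2},\dots$ with $a_1=1$ and $a_b$ the smallest index $>a_{b-1}$ with $x_{a_b}\ge x_{a_{b-1}}$. Scanning paths: for each column $l$ and $k=c_l,c_l-1,\dots,1$ in turn, delete the boxes of the previously computed $P(T;l,k')$, $k'>k$ (leaving a semistandard tableau of valid shape); form the sequence of entries in the lowest box of each of columns $l,\dots,\lambda_1$ of the current shape (skipping empty columns); $P(T;l,k)$ is the set of locations of the terms of its EWIS. Every location $(a,b)\ge(l,c_l)$ lies in exactly one $P(T;l,k)$. For $(j,i)>(l,1)$, the most recent location of $P(T;l,k)$ relative to $(j,i)$ is the latest location (in reading order)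 of $P(T;l,k)$ strictly before $(j,i)$, and the most recent value is the entry of $T$ there. *)

(* Defs.v *)
From mathcomp Require Import all_boot all_order.
Set Implicit Arguments. Unset Strict Implicit. Unset Printing Implicit Defensive.

(* Locations are pairs (j, i) = (column, row), both 1-based. *)
Definition loc := (nat * nat)%type.

Definition part_entry (lam : seq nat) (i : nat) : nat := nth 0 lam i.-1.

Definition is_partition (n : nat) (lam : seq nat) : Prop :=
  [/\ size lam = n, sorted geq lam, part_entry lam n = 0 & lam != nseq n 0].

Definition in_shape (lam : seq nat) (x : loc) : bool :=
  [&& 0 < x.2, x.2 <= size lam, 0 < x.1 & x.1 <= part_entry lam x.2].

Definition col_len (lam : seq nat) (j : nat) : nat := count (fun x => j <= x) lam.

(* T j i is the entry T(j,i) in column j, row i *)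
Definition semistandard (n : nat) (lam : seq nat) (T : nat -> nat -> nat) : Prop :=
  [/\ (forall j i, in_shape lam (j, i) -> 1 <= T j i <= n),
      (forall j i, in_shape lam (j, i) -> in_shape lam (j.+1, i) -> T j i <= T j.+1 i)
    & (forall j i, in_shape lam (j, i) -> in_shape lam (j, i.+1) -> T j i < T j i.+1)].

Definition rle (x y : loc) : bool := (x.1 < y.1) || ((x.1 == y.1) && (y.2 <= x.2)).
Definition rlt (x y : loc) : bool := (x.1 < y.1) || ((x.1 == y.1) && (y.2 < x.2)).

Fixpoint ewis_from (A : Type) (f : A -> nat) (v : nat) (s : seq A) : seq A :=
  match s with
  | [::] => [::]
  | x :: s' => if v <= f x then x :: ewis_from f (f x) s' else ewis_from f v s'
  end.

Definition ewis (A : Type) (f : A -> nat) (s : seq A) : seq A :=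
  match s with
  | [::] => [::]
  | x :: s' => x :: ewis_from f (f x) s'
  end.

Definition Tloc (T : nat -> nat -> nat) (x : loc) : nat := T x.1 x.2.

(* row of the lowest remaining box of column a, after deleting the boxes in R
   (0 if the column has become empty) *)
Definition lowest_row (lam : seq nat) (R : seq loc) (a : nat) : nat :=
  \max_(1 <= b < (size lam).+1 | in_shape lam (a, b) && ((a, b) \notin R)) b.

Definition lowest_boxes (lam : seq nat) (R : seq loc) (l : nat) : seq loc :=
  [seq (a, lowest_row lam R a)
     | a <- iota l ((part_entry lam 1).+1 - l) & 0 < lowest_row lam R a].

Definition scan_step (lam : seq nat) (T : nat -> nat -> nat) (l : nat) (R : seq loc)
  : seq loc := ewis (Tloc T) (lowest_boxes lam R l).

(* boxes deleted after computing the first t paths P(T;l,c_l), ..., P(T;l,c_l-t+1) *)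
Fixpoint scan_removed (lam : seq nat) (T : nat -> nat -> nat) (l t : nat) : seq loc :=
  match t with
  | 0 => [::]
  | t'.+1 => let R := scan_removed lam T l t' in R ++ scan_step lam T l R
  end.

Definition scan_path (lam : seq nat) (T : nat -> nat -> nat) (l k : nat) : seq loc :=
  scan_step lam T l (scan_removed lam T l (col_len lam l - k)).

Definition rlast (d : loc) (s : seq loc) : loc :=
  foldl (fun acc y => if rle acc y then y else acc)
        (head d s) (behead s).

Definition most_recent_loc (P : seq loc) (x : loc) : loc :=
  rlast (0, 0) [seq y <- P | rlt y x].

Definition most_recent_val (lam : seq nat) (T : nat -> nat -> nat) (l k : nat) (x : loc)
  : nat := Tloc T (most_recent_loc (scan_path lam T l k) x).

(* Main.v *)
Require Import Defs.
From mathcomp Require Import all_boot all_order zify.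
Set Implicit Arguments. Unset Strict Implicit. Unset Printing Implicit Defensive.

Fixpoint ewv (A : Type) (f : A -> nat) (v : nat) (s : seq A) : nat :=
  match s with
  | [::] => v
  | x :: s' => if v <= f x then ewv f (f x) s' else ewv f v s'
  end.

Lemma ewis_from_cat (A : Type) (f : A -> nat) v s1 s2 :
  ewis_from f v (s1 ++ s2) = ewis_from f v s1 ++ ewis_from f (ewv f v s1) s2.
Proof.
elim: s1 v => [|x s1 IH] v //=; case: ifP => _ //=; by rewrite IH.
Qed.

Lemma ewv_cat (A : Type) (f : A -> nat) v s1 s2 :
  ewv f v (s1 ++ s2) = ewv f (ewv f v s1) s2.
Proof. elim: s1 v => [|x s1 IH] v //=; case: ifP => _; exact: IH. Qed.

Lemma ewis_eq0 (A : Type) (f : A -> nat) s : ewis f s = ewis_from f 0 s.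
Proof. by case: s. Qed.

Lemma ewis_from_subseq (A : eqType) (f : A -> nat) v s : subseq (ewis_from f v s) s.
Proof.
elim: s v => [|x s IH] v //=; case: ifP => _.
  by rewrite eqxx IH.
apply: subseq_trans (IH v) (subseq_cons _ _).
Qed.

Lemma ewv_last (A : Type) (f : A -> nat) s : forall v x0, f x0 = v ->
  f (last x0 (ewis_from f v s)) = ewv f v s.
Proof.
elim: s => [|x s IH] v x0 H //=; case: ifP => _ /=; last exact: IH.
exact: IH.
Qed.

Definition colrel (x y : loc) : bool := x.1 < y.1.

Lemma colrel_trans : transitive colrel.
Proof. move=> y x z; rewrite /colrel; exact: ltn_trans. Qed.

Lemma rlast_sorted d s : sorted colrel s -> rlast d s = last d s.
Proof.
case: s => [|x s] //= H; rewrite /rlast /=.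
elim: s x H => [|y s IH] x //= /andP[Hxy Hp].
rewrite /rle /colrel /= in Hxy *; rewrite Hxy /=. exact: IH.
Qed.

Lemma max_lemma (P : pred nat) m N : (forall b, P b = (0 < b <= m)) -> m <= N ->
  \max_(1 <= b < N.+1 | P b) b = m.
Proof.
move=> HP HmN.
suff : forall n, \max_(1 <= b < n.+1 | P b) b = minn m n.
  by move=> ->; apply/minn_idPl.
elim=> [|n IH]; first by rewrite big_geq // minn0.
rewrite big_mkcond big_nat_recr //= -big_mkcond IH HP.
case: ifP => H; rewrite /=; lia.
Qed.

Lemma decr_strict (N : nat) (g : nat -> nat) :
  (forall t, t.+1 < N -> g t.+1 < g t) ->
  forall t1 t2, t1 < t2 -> t2 < N -> g t2 < g t1.
Proof.
move=> H t1; elim=> [|t2 IH] // Ht Hn.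
rewrite ltnS leq_eqVlt in Ht; case/orP: Ht => [/eqP->|Ht]; first exact: H.
apply: ltn_trans (H _ Hn) (IH Ht (ltnW Hn)).
Qed.

Definition mm (e beta w : nat -> nat) (i t : nat) : nat :=
  if (i < beta t) && (e t <= w (beta t)) then w (beta t) else e t.

Section Abs.
Variables (N : nat) (e beta w : nat -> nat).
Hypothesis He : forall t, t.+1 < N -> e t.+1 < e t.
Hypothesis Hb : forall t, beta t.+1 = if (0 < beta t) && (e t <= w (beta t)) then (beta t).-1 else beta t.
Hypothesis Hw : forall b b', 0 < b -> b < b' -> b' <= beta 0 -> w b < w b'.

Lemma beta_step t : beta t.+1 <= beta t /\ (beta t).-1 <= beta t.+1.
Proof. rewrite Hb; case: ifP => _; lia. Qed.

Lemma beta_mono t1 t2 : t1 <= t2 -> beta t2 <= beta t1.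
Proof.
move/subnK <-; elim: (t2 - t1) => [|d IH] //=.
rewrite addSn; apply: leq_trans IH; exact: (beta_step _).1.
Qed.

Lemma mm_decr i t : t.+1 < N -> mm e beta w i t.+1 < mm e beta w i t.
Proof.
move=> Ht; have Het := He Ht.
have Hb0 : beta t <= beta 0 by apply: beta_mono.
rewrite /mm Hb.
case: (boolP ((0 < beta t) && (e t <= w (beta t)))) => [/andP[H0 H1]|Hn].
  case: (ltnP i (beta t)) => Hi /=.
    rewrite H1 /=.
    case: ifP => [/andP[H2 H3]|_]; last by apply: leq_trans Het H1.
    apply: Hw => //; lia.
  have -> : (i < (beta t).-1) = false by apply/negbTE; rewrite -leqNgt; lia.
  by [].
have -> : (i < beta t) && (e t <= w (beta t)) = false.
  apply/negbTE; apply: contra Hn => /andP[H1 H2]; rewrite H2 andbT; lia.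
case: ifP => [/andP[H1 H2]|_ //].
have Hp : 0 < beta t by lia.
by move: Hn; rewrite Hp /= -ltnNge.
Qed.

Lemma mm_strict i t1 t2 : t1 < t2 -> t2 < N -> mm e beta w i t2 < mm e beta w i t1.
Proof. apply: decr_strict; exact: mm_decr. Qed.

Lemma find_take i t : 0 < i <= beta 0 -> beta t < i ->
  exists2 t', t' < t & (beta t' == i) && (e t' <= w i).
Proof.
move=> Hi; elim: t => [|t IH] Ht; first lia.
case: (ltnP (beta t) i) => H.
  by case: (IH H) => t' H1 H2; exists t' => //; apply: ltnW.
have [S1 S2] := beta_step t.
have Heq : beta t = i by lia.
exists t => //; rewrite Heq eqxx /=.
move: Ht; rewrite Hb Heq; case: ifP => [/andP[]//|_]; lia.
Qed.

Lemma final_abs i t : 0 < i <= beta 0 -> t < N ->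
  [&& 0 < beta t, beta t == i & e t <= w i] <->
  (mm e beta w i t <= w i /\
   forall t', t' < N -> mm e beta w i t' <= w i -> mm e beta w i t' <= mm e beta w i t).
Proof.
move=> Hi HtN.
have fwd : forall t, t < N -> [&& 0 < beta t, beta t == i & e t <= w i] ->
  (mm e beta w i t <= w i /\
   forall t', t' < N -> mm e beta w i t' <= w i -> mm e beta w i t' <= mm e beta w i t).
  move=> {}t {}HtN /and3P[H0 /eqP Hbi Hle].
  have Hm : mm e beta w i t = e t by rewrite /mm Hbi ltnn.
  split; first by rewrite Hm.
  move=> t' Ht'N Hm'.
  case: (ltngtP t' t) => Htt; last by rewrite Htt.
    exfalso.
    have Hbb : i <= beta t' by rewrite -Hbi; apply: beta_mono; apply: ltnW.
    have Hb0 : beta t' <= beta 0 by apply: beta_mono.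
    move: Hm'; rewrite /mm.
    case: (ltngtP i (beta t')) => Hc /=; last first.
      have : e t' > w i.
        rewrite ltnNge; apply/negP => H.
        have [S1 _] := beta_step t'.
        have : beta t'.+1 < i.
          rewrite Hb -Hc H andbT ifT; [rewrite ltn_predL|]; lia.
        have : beta t <= beta t'.+1 by apply: beta_mono.
        lia.
      move=> H1 H2; lia.
      move=> _; lia.
      have Hwi : w i < w (beta t') by apply: Hw => //; lia.
      case: ifP => [_|/negbT]; first by rewrite leqNgt Hwi.
      rewrite -ltnNge => H; rewrite leqNgt (ltn_trans Hwi H) //.
  apply: ltnW; exact: mm_strict.
split; first exact: fwd.
move=> [Hm Hmax].
have Hb0 : beta t <= beta 0 by apply: beta_mono.
case: (ltngtP (beta t) i) => Hc.
- exfalso.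
  case: (find_take Hi Hc) => t' Ht' Htake.
  have Ht'N : t' < N by apply: ltn_trans HtN.
  have H0 : 0 < beta t' by case/andP: Htake => /eqP ->; lia.
  have Htk : [&& 0 < beta t', beta t' == i & e t' <= w i] by rewrite H0.
  have [Hm' _] := fwd t' Ht'N Htk.
  have := Hmax t' Ht'N Hm'.
  by rewrite leqNgt mm_strict.
- exfalso; move: Hm; rewrite /mm Hc /=.
  have Hwi : w i < w (beta t) by apply: Hw => //; lia.
  case: ifP => [_|/negbT]; first by rewrite leqNgt Hwi.
  rewrite -ltnNge => H; rewrite leqNgt (ltn_trans Hwi H) //.
- move: Hm; rewrite /mm Hc ltnn /= => Hm; rewrite Hm ?eqxx ?andbT; lia.
Qed.
End Abs.

Lemma nth_count (s : seq nat) a : sorted geq s -> forall i, i < size s ->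
  (a <= nth 0 s i) = (i < count (fun x => a <= x) s).
Proof.
elim: s => [|x s IH] //= Hs i Hi.
have Htr : transitive geq by move=> ??? /= H1 H2; apply: leq_trans H2 H1.
have Hall : all (geq x) s := order_path_min Htr Hs.
have Hs' : sorted geq s by apply: path_sorted Hs.
case: (leqP a x) => Hax.
  case: i Hi => [|i] Hi //=. rewrite add1n ltnS. exact: IH.
have Hc : count (fun x0 => a <= x0) s = 0.
  apply/eqP; rewrite -leqn0 leqNgt -has_count; apply/hasPn => y Hy /=.
  move/allP: Hall => /(_ y Hy) /= Hyx; rewrite -ltnNge; exact: leq_ltn_trans Hyx Hax.
rewrite Hc /=. case: i Hi => [|i] Hi /=; first by rewrite leqNgt Hax.
apply/negbTE; rewrite -ltnNge.
have Hy : nth 0 s i \in s by apply: mem_nth.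
move/allP: Hall => /(_ _ Hy) /= Hyx; exact: leq_ltn_trans Hyx Hax.
Qed.

Lemma in_shape_col lam a b : sorted geq lam -> 0 < a ->
  in_shape lam (a, b) = (0 < b <= col_len lam a).
Proof.
move=> Hs Ha; rewrite /in_shape /= Ha /part_entry /col_len.
case: (posnP b) => [->|Hb] //=.
have Hc := count_size (fun x => a <= x) lam.
case: (leqP b (size lam)) => Hbs /=.
  rewrite nth_count //; last lia. by rewrite prednK.
apply/esym/negbTE; rewrite -ltnNge; lia.
Qed.

Lemma col_len_le lam a : col_len lam a <= size lam.
Proof. exact: count_size. Qed.

Lemma lowest_row_eq lam Rr a m :
  (forall b, in_shape lam (a, b) && ((a, b) \notin Rr) = (0 < b <= m)) -> m <= size lam ->
  lowest_row lam Rr a = m.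
Proof. move=> H Hm; rewrite /lowest_row; exact: max_lemma. Qed.

Lemma mem_lowest lam Rr l x : x \in lowest_boxes lam Rr l ->
  [/\ x.2 = lowest_row lam Rr x.1, 0 < x.2 & l <= x.1 <= part_entry lam 1].
Proof.
case/mapP => a; rewrite mem_filter mem_iota => /andP[H1 H2] -> /=; split => //; lia.
Qed.

Section Conc.
Variables (lam : seq nat) (T : nat -> nat -> nat) (l : nat).
Hypothesis Hsort : sorted geq lam.
Hypothesis Hl : 1 <= l.

Definition bt t a := lowest_row lam (scan_removed lam T l t) a.
Definition pth t := scan_step lam T l (scan_removed lam T l t).

Definition Jinv t := (forall a b, in_shape lam (a, b) && ((a, b) \notin scan_removed lam T l t)
   = (0 < b <= bt t a)) /\ (forall a, bt t a <= size lam).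

Lemma pth_mem t a b : (a, b) \in pth t ->
  (a, b) \in lowest_boxes lam (scan_removed lam T l t) l.
Proof.
rewrite /pth /scan_step ewis_eq0; apply: mem_subseq; exact: ewis_from_subseq.
Qed.

Lemma avail_step t : Jinv t -> Jinv t.+1 /\
  (forall a, bt t.+1 a = if (a, bt t a) \in pth t then (bt t a).-1 else bt t a).
Proof.
move=> [IH1 IH2].
have Hmem : forall a b, (a, b) \in pth t -> b = bt t a.
  by move=> a b /pth_mem H'; have [] := mem_lowest H'.
set m' := fun a => if (a, bt t a) \in pth t then (bt t a).-1 else bt t a.
have Hav : forall a b, in_shape lam (a, b) && ((a, b) \notin scan_removed lam T l t.+1)
   = (0 < b <= m' a).
  move=> a b; rewrite /= mem_cat negb_or andbA IH1 /m'.
  case Hin: ((a, b) \in pth t) => /=.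
    have Hb := Hmem _ _ Hin; rewrite -Hb Hin andbF; apply/esym/negbTE; lia.
  rewrite andbT; case: ifP => Hin2 //.
  have Hne : b != bt t a by apply/eqP => Hb; rewrite Hb Hin2 in Hin.
  apply/idP/idP; lia.
have Hbt : forall a, bt t.+1 a = m' a.
  move=> a; apply: lowest_row_eq; first exact: Hav.
  rewrite /m'; case: ifP => _; have := IH2 a; lia.
split => //; split => a; last by rewrite Hbt /m'; case: ifP => _; have := IH2 a; lia.
by move=> b; rewrite Hbt Hav.
Qed.

Lemma bt0 a : 0 < a -> bt 0 a = col_len lam a.
Proof.
move=> Ha; apply: lowest_row_eq; last exact: col_len_le.
by move=> b; rewrite /= andbT in_shape_col.
Qed.

Lemma avail_inv t : Jinv t.
Proof.
elim: t => [|t IH]; last exact: (avail_step IH).1.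
have Hb : forall a, bt 0 a = (if 0 < a then col_len lam a else 0).
  move=> a; case: (posnP a) => [->|Ha]; last by rewrite bt0.
  apply: lowest_row_eq => // b; by case: b => [|b]; rewrite /in_shape /= ?andbF.
split => a; last by rewrite Hb; case: ifP => _ //; exact: col_len_le.
move=> b; rewrite Hb /= andbT; case: (posnP a) => [->|Ha].
  by case: b => [|b]; rewrite /in_shape /= ?andbF.
by rewrite in_shape_col.
Qed.

Lemma bt_succ t a : bt t.+1 a = if (a, bt t a) \in pth t then (bt t a).-1 else bt t a.
Proof. exact: (avail_step (avail_inv t)).2. Qed.


Lemma ewis_mem (A : eqType) (f : A -> nat) v s x : x \in ewis_from f v s -> x \in s.
Proof. apply: mem_subseq; exact: ewis_from_subseq. Qed.

Definition Slt t j := [seq (a, bt t a) | a <- iota l (j - l) & 0 < bt t a].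
Definition Mid t j := [seq (a, bt t a) | a <- [:: j] & 0 < bt t a].
Definition Sgt t j := [seq (a, bt t a) | a <- iota j.+1 (part_entry lam 1 - j) & 0 < bt t a].
Definition evj t j := ewv (Tloc T) 0 (Slt t j).

Lemma lowest_split t j : l <= j <= part_entry lam 1 ->
  lowest_boxes lam (scan_removed lam T l t) l = Slt t j ++ Mid t j ++ Sgt t j.
Proof.
move=> Hj; rewrite /lowest_boxes /Slt /Mid /Sgt -!map_cat -!filter_cat.
have -> : (part_entry lam 1).+1 - l = (j - l) + (part_entry lam 1 - j).+1 by lia.
rewrite iotaD subnKC; last lia.
by [].
Qed.

Lemma Slt_col t j x : x \in Slt t j -> x.1 < j /\ l <= x.1.
Proof. case/mapP => a; rewrite mem_filter mem_iota => /andP[_ H] -> /=; lia. Qed.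

Lemma Sgt_col t j x : x \in Sgt t j -> j < x.1.
Proof. case/mapP => a; rewrite mem_filter mem_iota => /andP[_ H] -> /=; lia. Qed.

Lemma pth_split t j : l <= j <= part_entry lam 1 ->
  pth t = ewis_from (Tloc T) 0 (Slt t j) ++ ewis_from (Tloc T) (evj t j) (Mid t j)
          ++ ewis_from (Tloc T) (ewv (Tloc T) (evj t j) (Mid t j)) (Sgt t j).
Proof.
move=> Hj; rewrite /pth /scan_step ewis_eq0 (lowest_split t Hj) !ewis_from_cat.
by [].
Qed.

Lemma Mid_eval t j v : ewis_from (Tloc T) v (Mid t j) =
  if (0 < bt t j) && (v <= T j (bt t j)) then [:: (j, bt t j)] else [::].
Proof. by rewrite /Mid /=; case: (0 < bt t j) => //=; case: ifP. Qed.

Lemma ewv_Mid t j v : ewv (Tloc T) v (Mid t j) =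
  if (0 < bt t j) && (v <= T j (bt t j)) then T j (bt t j) else v.
Proof. by rewrite /Mid /=; case: (0 < bt t j) => //=; case: ifP. Qed.

Lemma mem_path t j i : l <= j <= part_entry lam 1 ->
  ((j, i) \in pth t) = [&& 0 < bt t j, bt t j == i & evj t j <= T j i].
Proof.
move=> Hj; rewrite (pth_split t Hj) !mem_cat Mid_eval.
have -> : (j, i) \in ewis_from (Tloc T) 0 (Slt t j) = false.
  apply/negbTE/negP => /ewis_mem /Slt_col /= [H _]; lia.
have -> : (j, i) \in ewis_from (Tloc T) (ewv (Tloc T) (evj t j) (Mid t j)) (Sgt t j) = false.
  apply/negbTE/negP => /ewis_mem /Sgt_col /= H; lia.
rewrite orbF /=.
case: (eqVneq (bt t j) i) => [<-|Hne].
  by rewrite andTb; case: ifP => H; rewrite ?inE ?eqxx ?H.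

rewrite andbF; case: ifP => _ //; rewrite inE xpair_eqE eqxx /=.
by apply/negbTE; rewrite eq_sym.
Qed.

Lemma bt_col t j : l <= j <= part_entry lam 1 ->
  bt t.+1 j = if (0 < bt t j) && (evj t j <= T j (bt t j)) then (bt t j).-1 else bt t j.
Proof. by move=> Hj; rewrite bt_succ mem_path // eqxx. Qed.

Lemma evj_succ t j : l <= j ->
  evj t j.+1 = if (0 < bt t j) && (evj t j <= T j (bt t j)) then T j (bt t j) else evj t j.
Proof.
move=> Hj; rewrite /evj -ewv_Mid -ewv_cat; congr ewv.
rewrite /Slt /Mid -map_cat -filter_cat.
have -> : j.+1 - l = (j - l) + 1 by lia.
by rewrite iotaD subnKC.
Qed.

Lemma evj_l t : evj t l = 0.
Proof. by rewrite /evj /Slt subnn. Qed.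

Lemma btl t : l < part_entry lam 1 -> bt t l = col_len lam l - t.
Proof.
move=> HlL; elim: t => [|t IH]; first by rewrite bt0 // subn0.
rewrite bt_col; last lia.
rewrite evj_l IH /=; case: ifP => H; lia.
Qed.


Lemma sorted_pth t : sorted colrel (pth t).
Proof.
rewrite /pth /scan_step ewis_eq0; apply: (subseq_sorted colrel_trans (ewis_from_subseq (Tloc T) 0 _)).
rewrite /lowest_boxes sorted_map; apply: sorted_filter.
  by move=> ???; rewrite /relpre /colrel /=; apply: ltn_trans.
exact: iota_ltn_sorted.
Qed.

Lemma mrv_eq t j i' : l < j <= part_entry lam 1 -> t < col_len lam l ->
  Tloc T (most_recent_loc (pth t) (j, i')) = mm (evj^~ j) (bt^~ j) (T j) i' t.
Proof.
move=> Hj Ht.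
have HlL : l < part_entry lam 1 by lia.
have Hj' : l <= j <= part_entry lam 1 by lia.
have Hsrt := sorted_filter colrel_trans (fun y => rlt y (j, i')) (sorted_pth t).
rewrite /most_recent_loc (rlast_sorted _ Hsrt).
rewrite (pth_split t Hj') !filter_cat Mid_eval.
have -> : [seq x <- ewis_from (Tloc T) 0 (Slt t j) | rlt x (j, i')] = ewis_from (Tloc T) 0 (Slt t j).
  apply/all_filterP/allP => x /ewis_mem /Slt_col [H _]; by rewrite /rlt H.
have -> : [seq x <- ewis_from (Tloc T) (ewv (Tloc T) (evj t j) (Mid t j)) (Sgt t j) | rlt x (j, i')] = [::].
  apply/eqP; rewrite -[_ == _]negbK -has_filter; apply/hasPn => -[a b] /ewis_mem /Sgt_col /= H.
  apply/negP; rewrite /rlt /= => /orP [H1 | /andP[/eqP H1 _]].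
    by have := ltn_trans H H1; rewrite ltnn.
  by rewrite H1 ltnn in H.
rewrite cats0.
have [rest Hs] : exists rest, Slt t j = (l, bt t l) :: rest.
  rewrite /Slt; have -> : j - l = (j - l).-1.+1 by lia.
  rewrite /= ifT; first by eexists.
  rewrite btl //; lia.
have Hlast : Tloc T (last (0, 0) (ewis_from (Tloc T) 0 (Slt t j))) = evj t j.
  by rewrite /evj Hs /=; apply: ewv_last.
rewrite /mm last_cat.
case: (posnP (bt t j)) => Hb0.
  by rewrite Hb0 /=.
rewrite /=.
case He: (evj t j <= T j (bt t j)) => /=; last by rewrite andbF.
rewrite /rlt /= ltnn eqxx /= andbT.
by case: ifP.
Qed.

Lemma col_strict j b b' : semistandard (size lam) lam T -> 0 < j -> 0 < b -> b < b' -> b' <= col_len lam j ->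
  T j b < T j b'.
Proof.
move=> [_ _ H3] Hj Hb; elim: b' => [|b' IH] // Hbb' Hb'.
have Hs1 : in_shape lam (j, b') by rewrite in_shape_col //; lia.
have Hs2 : in_shape lam (j, b'.+1) by rewrite in_shape_col //; lia.
have := H3 _ _ Hs1 Hs2.
rewrite ltnS leq_eqVlt in Hbb'; case/orP: Hbb' => [/eqP->//|Hbb'].
move=> H; apply: ltn_trans H; apply: IH => //; lia.
Qed.


Lemma evj_strict j : semistandard (size lam) lam T -> l < part_entry lam 1 ->
  l < j <= part_entry lam 1 -> forall t, t.+1 < col_len lam l -> evj t.+1 j < evj t j.
Proof.
move=> Hss HlL; elim: j => [|j IH] // Hj t Ht.
have Hlj : l <= j by lia.
rewrite !evj_succ //.
case: (eqVneq j l) => [Hjl|Hne].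
  subst j; rewrite !evj_l !btl //.
  have H1 : 0 < col_len lam l - t.+1 by lia.
  have H2 : 0 < col_len lam l - t by lia.
  rewrite H1 H2 /=. apply: col_strict => //; lia.
have Hj' : l < j <= part_entry lam 1 by lia.
have Hj'' : l <= j <= part_entry lam 1 by lia.
have Hw : forall b b', 0 < b -> b < b' -> b' <= bt 0 j -> T j b < T j b'.
  move=> b b' Hb Hbb' Hb'; apply: col_strict => //; first lia.
  by rewrite -bt0 //; lia.
have := mm_decr (IH Hj') (fun t => bt_col t Hj'') Hw 0 Ht.
by rewrite /mm.
Qed.

End Conc.

Unset Implicit Arguments.
Theorem lemma3p2 (n : nat) (lam : seq nat) (T : nat -> nat -> nat) (l j i : nat) :
  0 < n ->
  is_partition n lam ->
  semistandard n lam T ->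
  1 <= l < part_entry lam 1 ->
  in_shape lam (j, i) ->
  rlt (l, 1) (j, i) ->
  forall k, 1 <= k <= col_len lam l ->
    ((j, i) \in scan_path lam T l k) <->
    (most_recent_val lam T l k (j, i) <= T j i /\
     forall k', 1 <= k' <= col_len lam l ->
       most_recent_val lam T l k' (j, i) <= T j i ->
       most_recent_val lam T l k' (j, i) <= most_recent_val lam T l k (j, i)).
Proof.
move=> Hn [Hsz Hsort Hlast Hnz] Hss /andP[Hl HlL] Hsh Hrlt k /andP[Hk1 Hk2].
have Hj0 : 0 < j by move: Hsh; rewrite /in_shape /= => /and4P[].
have Hi : 0 < i <= col_len lam j by rewrite -in_shape_col.
have Hlj : l < j.
  move: Hrlt; rewrite /rlt /= => /orP[//|/andP[_ H]]; lia.
have HjL : j <= part_entry lam 1.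
  have : in_shape lam (j, 1) by rewrite in_shape_col //; lia.
  by rewrite /in_shape => /and4P[_ _ _ H]; exact H.
have Hss' : semistandard (size lam) lam T by rewrite Hsz.
have Hj' : l < j <= part_entry lam 1 by lia.
have Hj'' : l <= j <= part_entry lam 1 by lia.
set c := col_len lam l.
have He := evj_strict Hsort Hl Hss' HlL Hj'.
have Hw : forall b b', 0 < b -> b < b' -> b' <= bt lam T l 0 j -> T j b < T j b'.
  move=> b b' Hb Hbb' Hb'; rewrite (bt0 T l Hsort Hj0) in Hb'.
  exact: (col_strict (l:=l) Hsort Hl Hss' Hj0 Hb Hbb' Hb').
have Hi' : 0 < i <= bt lam T l 0 j by rewrite bt0.
have Htk : c - k < c by lia.
have key := final_abs He (fun t => bt_col T Hsort Hl t Hj'') Hw Hi' Htk.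
have E1 : ((j, i) \in scan_path lam T l k) = ((j, i) \in pth lam T l (c - k)) by [].
have E2 : forall k', 1 <= k' <= c -> most_recent_val lam T l k' (j, i)
   = mm (fun t => evj lam T l t j) (fun t => bt lam T l t j) (T j) i (c - k').
  move=> k' Hk'; rewrite -(mrv_eq T Hsort Hl) //; lia.
have Hkk : 1 <= k <= c by lia.
rewrite E1 (mem_path T Hsort Hl) // key E2 //.
split => -[H1 H2]; split => //.
  move=> k' Hk'; rewrite !E2 //; apply: H2; lia.
move=> t' Ht'.
have Hk' : 1 <= c - t' <= c by lia.
have := H2 (c - t') Hk'; rewrite !E2 //.
have -> : c - (c - t') = t' by lia.
by [].
Qed.
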